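(* For every $n\ge 3$, $\beta(P_{2\infty}\,\Box\, C_n)=3$ if $n$ is odd and $\beta(P_{2\infty}\,\Box\, C_n)=4$ if $n$ is even. Moreover, $\{(0,0),(0,\tfrac{n-1}{2}),(1,0)\}$ is a metric basis of $P_{2\infty}\,\Box\, C_n$ when $n$ is odd, and $\{(0,0),(0,\tfrac n2),(0,1),(1,0)\}$ is a metric basis when $n$ is even.
   Context: $P_{2\infty}$ has vertex set $\mathbb Z$ with $i,j$ adjacent iff $|i-j|=1$. $C_n$ has vertex set $\{0,1,\dots,n-1\}$, with $0\le i\le j\le n-1$ adjacent iff $j-i=1$ or $j-i=n-1$. The cartesian product $G\Box H$ has vertex set $V(G)\times V(H)$, where $(a,v)$ is adjacent to $(b,w)$ iff either $a=b$ and $vw\in E(H)$, or $v=w$ and $ab\in E(G)$. A vertex $x$ resolves $u,v$ if $d(u,x)\ne d(v,x)$ (shortest-path distance); a resolving set is a set of vertices resolving every pair of distinct vertices; $\beta$ is the minimum cardinality of a resolving set ($\infty$ if none is finite), and a metric basis is a resolving set of cardinality $\beta$. *)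

(* Defs.v *)
(* vertices of P_{2oo} [] C_n are pairs (a, i) : Z * Z with 0 <= i < n. *)
From Stdlib Require Import ZArith List.
Open Scope Z_scope.

Definition vertex := (Z * Z)%type.

Definition is_vertex (n : Z) (v : vertex) : Prop := 0 <= snd v < n.

Definition adjP (a b : Z) : Prop := Z.abs (a - b) = 1.

Definition adjC (n : Z) (i j : Z) : Prop :=
  0 <= i < n /\ 0 <= j < n /\ (Z.abs (i - j) = 1 \/ Z.abs (i - j) = n - 1).

Definition adj (n : Z) (u w : vertex) : Prop :=
  is_vertex n u /\ is_vertex n w /\
  ((fst u = fst w /\ adjC n (snd u) (snd w)) \/
   (snd u = snd w /\ adjP (fst u) (fst w))).

Inductive walk (n : Z) : vertex -> vertex -> nat -> Prop :=
| walk_nil : forall u, is_vertex n u -> walk n u u 0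
| walk_cons : forall u w v k, adj n u w -> walk n w v k -> walk n u v (S k).

Definition dist (n : Z) (u v : vertex) (d : nat) : Prop :=
  walk n u v d /\ (forall m, walk n u v m -> (d <= m)%nat).

Definition resolves (n : Z) (x u v : vertex) : Prop :=
  exists du dv, dist n u x du /\ dist n v x dv /\ du <> dv.

Definition resolving_set (n : Z) (W : vertex -> Prop) : Prop :=
  (forall x, W x -> is_vertex n x) /\
  (forall u v, is_vertex n u -> is_vertex n v -> u <> v ->
     exists x, W x /\ resolves n x u v).

(* beta(P_{2oo} [] C_n) = k : there is a resolving set of cardinality k, and every
   finite resolving set has cardinality >= k (infinite ones trivially do). *)
Definition metric_dim (n : Z) (k : nat) : Prop :=
  (exists l : list vertex, NoDup l /\ length l = k /\ resolving_set n (fun x => In x l)) /\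
  (forall l : list vertex, NoDup l -> resolving_set n (fun x => In x l) -> (k <= length l)%nat).

Definition metric_basis (n : Z) (l : list vertex) : Prop :=
  NoDup l /\ resolving_set n (fun x => In x l) /\ metric_dim n (length l).

(* Main.v *)
Require Import Defs.
From Stdlib Require Import ZArith List Lia Classical.
Import ListNotations.
Open Scope Z_scope.

Definition cyc (n i j : Z) : Z := Z.min (Z.abs (i - j)) (n - Z.abs (i - j)).
Definition DF (n : Z) (u v : vertex) : Z := Z.abs (fst u - fst v) + cyc n (snd u) (snd v).

Lemma adj_le n u w v : adj n u w -> is_vertex n v -> DF n u v <= 1 + DF n w v.
Proof.
  destruct u as [a i], w as [b j], v as [c k].
  unfold adj, is_vertex, adjC, adjP, DF, cyc; cbn [fst snd]; lia.
Qed.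

Lemma walk_vert n u v k : walk n u v k -> is_vertex n u /\ is_vertex n v.
Proof.
  induction 1; auto. destruct H as [? [? ?]]; tauto.
Qed.

Lemma walk_ge n u v k : walk n u v k -> DF n u v <= Z.of_nat k.
Proof.
  induction 1.
  - destruct u; unfold DF, cyc; cbn [fst snd]; lia.
  - pose proof (walk_vert _ _ _ _ H0) as [_ Hv].
    pose proof (adj_le _ _ _ _ H Hv). lia.
Qed.

Lemma walk_app n u w v k1 k2 : walk n u w k1 -> walk n w v k2 -> walk n u v (k1 + k2).
Proof.
  induction 1; intros; simpl; auto. econstructor; eauto.
Qed.

Lemma walk_col n : forall k : nat, forall a b i, 0 <= i < n -> Z.abs (a - b) = Z.of_nat k ->
  walk n (a, i) (b, i) k.
Proof.
  induction k; intros a b i Hi Hk.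
  - assert (a = b) by lia; subst. constructor. unfold is_vertex; simpl; lia.
  - destruct (Z_lt_ge_dec a b).
    + apply walk_cons with (w := (a + 1, i)).
      * unfold adj, is_vertex, adjP; simpl; lia.
      * apply IHk; lia.
    + apply walk_cons with (w := (a - 1, i)).
      * unfold adj, is_vertex, adjP; simpl; lia.
      * apply IHk; lia.
Qed.

Lemma step_exists n i j : 3 <= n -> 0 <= i < n -> 0 <= j < n -> i <> j ->
  exists i', 0 <= i' < n /\ adjC n i i' /\ cyc n i' j = cyc n i j - 1.
Proof.
  intros Hn Hi Hj Hij. unfold adjC.
  destruct (Z.lt_ge_cases i j).
  - destruct (Z.le_gt_cases (2 * (j - i)) n).
    + exists (i + 1). split; [lia|]. split; [lia|]. unfold cyc; lia.
    + destruct (Z.eq_dec i 0).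
      * exists (n - 1). split; [lia|]. split; [lia|]. subst i. unfold cyc; lia.
      * exists (i - 1). split; [lia|]. split; [lia|]. unfold cyc; lia.
  - destruct (Z.le_gt_cases (2 * (i - j)) n).
    + exists (i - 1). split; [lia|]. split; [lia|]. unfold cyc; lia.
    + destruct (Z.eq_dec i (n - 1)).
      * exists 0. split; [lia|]. split; [lia|]. subst i. unfold cyc; lia.
      * exists (i + 1). split; [lia|]. split; [lia|]. unfold cyc; lia.
Qed.

Lemma walk_row n (hn : 3 <= n) : forall k : nat, forall a i j, 0 <= i < n -> 0 <= j < n ->
  cyc n i j = Z.of_nat k -> walk n (a, i) (a, j) k.
Proof.
  induction k; intros a i j Hi Hj Hk.
  - assert (i = j) by (unfold cyc in Hk; lia); subst. constructor. unfold is_vertex; simpl; lia.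
  - destruct (Z.eq_dec i j) as [E|E].
    { subst. unfold cyc in Hk. lia. }
    destruct (step_exists n i j hn Hi Hj E) as [i' [H1 [H2 H3]]].
    apply walk_cons with (w := (a, i')).
    + unfold adj, is_vertex; simpl; tauto.
    + apply IHk; auto. lia.
Qed.

Lemma dist_exists n (hn : 3 <= n) u v : is_vertex n u -> is_vertex n v ->
  dist n u v (Z.to_nat (DF n u v)).
Proof.
  destruct u as [a i], v as [b j]; unfold is_vertex; simpl; intros Hu Hv.
  split.
  - assert (0 <= cyc n i j) by (unfold cyc; lia).
    replace (Z.to_nat (DF n (a, i) (b, j))) with (Z.to_nat (Z.abs (a - b)) + Z.to_nat (cyc n i j))%nat
      by (unfold DF; cbn [fst snd]; lia).
    apply walk_app with (w := (b, i)).
    + apply walk_col; lia.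
    + apply walk_row; lia.
  - intros m Hm. apply walk_ge in Hm. lia.
Qed.

Lemma dist_eq n (hn : 3 <= n) u v d : dist n u v d -> Z.of_nat d = DF n u v.
Proof.
  intros [Hw Hmin].
  pose proof (walk_vert _ _ _ _ Hw) as [Hu Hv].
  pose proof (walk_ge _ _ _ _ Hw).
  pose proof (Hmin _ (proj1 (dist_exists n hn u v Hu Hv))).
  assert (0 <= DF n u v) by (destruct u, v; unfold DF, cyc; unfold is_vertex in *; cbn [fst snd] in *; lia).
  lia.
Qed.

Lemma resolves_iff n (hn : 3 <= n) x u v : is_vertex n x -> is_vertex n u -> is_vertex n v ->
  (resolves n x u v <-> DF n u x <> DF n v x).
Proof.
  intros Hx Hu Hv; split.
  - intros [du [dv [H1 [H2 H3]]]].
    apply dist_eq in H1; auto. apply dist_eq in H2; auto. lia.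
  - intros H. exists (Z.to_nat (DF n u x)), (Z.to_nat (DF n v x)).
    split; [apply dist_exists; auto|]. split; [apply dist_exists; auto|].
    assert (0 <= DF n u x) by (destruct u, x; unfold DF, cyc; unfold is_vertex in *; cbn [fst snd] in *; lia).
    assert (0 <= DF n v x) by (destruct v, x; unfold DF, cyc; unfold is_vertex in *; cbn [fst snd] in *; lia).
    lia.
Qed.

Lemma not_resolving n (hn : 3 <= n) (l : list vertex) u v :
  is_vertex n u -> is_vertex n v -> u <> v ->
  (forall x, In x l -> DF n u x = DF n v x) ->
  ~ resolving_set n (fun x => In x l).
Proof.
  intros Hu Hv Huv Hall [Hl Hr].
  destruct (Hr u v Hu Hv Huv) as [x [Hx Hres]].
  apply (resolves_iff n hn x u v (Hl x Hx) Hu Hv) in Hres. auto.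
Qed.

Definition nxt (n e : Z) : Z := if Z.eq_dec e (n - 1) then 0 else e + 1.
Lemma nxt_spec n e : (e <> n - 1 /\ nxt n e = e + 1) \/ (e = n - 1 /\ nxt n e = 0).
Proof. unfold nxt; destruct Z.eq_dec; auto. Qed.
Lemma nxt_range n e : 0 <= e < n -> 0 <= nxt n e < n.
Proof. destruct (nxt_spec n e) as [[? ->]|[? ->]]; lia. Qed.
Lemma nxt_cyc n e j : 0 <= e < n -> 0 <= j < n -> cyc n (nxt n e) j = cyc n (e + 1) j.
Proof. destruct (nxt_spec n e) as [[? ->]|[? ->]]; unfold cyc; lia. Qed.
Lemma nxt_neq n e : 3 <= n -> 0 <= e < n -> nxt n e <> e.
Proof. destruct (nxt_spec n e) as [[? ->]|[? ->]]; lia. Qed.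

Definition ok1 (a b d : Z) : Prop := (a < b /\ d = 1) \/ (b <= a /\ d = -1).

Lemma th n a r r' b j : ok1 a b (cyc n r' j - cyc n r j) -> DF n (a, r) (b, j) = DF n (a + 1, r') (b, j).
Proof. unfold ok1, DF; cbn [fst snd]; lia. Qed.

Definition dd n e j := cyc n (e + 1) j - cyc n e j.

Definition Coll2 n (w1 w2 : vertex) := exists u v, is_vertex n u /\ is_vertex n v /\ u <> v /\
  DF n u w1 = DF n v w1 /\ DF n u w2 = DF n v w2.
Definition Coll3 n (w1 w2 w3 : vertex) := exists u v, is_vertex n u /\ is_vertex n v /\ u <> v /\
  DF n u w1 = DF n v w1 /\ DF n u w2 = DF n v w2 /\ DF n u w3 = DF n v w3.

Lemma edge_coll2 n a e b1 j1 b2 j2 : 3 <= n -> 0 <= e < n -> 0 <= j1 < n -> 0 <= j2 < n ->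
  (ok1 a b1 (dd n e j1) /\ ok1 a b2 (dd n e j2)) \/
  (ok1 a b1 (- dd n e j1) /\ ok1 a b2 (- dd n e j2)) -> Coll2 n (b1, j1) (b2, j2).
Proof.
  intros Hn He H1 H2 [[A B]|[A B]]; unfold dd in *.
  - exists (a, e), (a + 1, nxt n e). pose proof (nxt_range n e He).
    rewrite <- !(nxt_cyc n e) in A, B by auto.
    unfold is_vertex; cbn [fst snd]; repeat split; try lia.
    + intro X; inversion X; lia.
    + apply th; auto.
    + apply th; auto.
  - exists (a, nxt n e), (a + 1, e). pose proof (nxt_range n e He).
    rewrite <- !(nxt_cyc n e) in A, B by auto.
    unfold is_vertex; cbn [fst snd]; repeat split; try lia.
    + intro X; inversion X; lia.
    + apply th; unfold ok1 in *; lia.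
    + apply th; unfold ok1 in *; lia.
Qed.

Lemma edge_coll3 n a e b1 j1 b2 j2 b3 j3 : 3 <= n -> 0 <= e < n -> 0 <= j1 < n -> 0 <= j2 < n -> 0 <= j3 < n ->
  (ok1 a b1 (dd n e j1) /\ ok1 a b2 (dd n e j2) /\ ok1 a b3 (dd n e j3)) \/
  (ok1 a b1 (- dd n e j1) /\ ok1 a b2 (- dd n e j2) /\ ok1 a b3 (- dd n e j3)) -> Coll3 n (b1, j1) (b2, j2) (b3, j3).
Proof.
  intros Hn He H1 H2 H3 [[A [B C]]|[A [B C]]]; unfold dd in *.
  - exists (a, e), (a + 1, nxt n e). pose proof (nxt_range n e He).
    rewrite <- !(nxt_cyc n e) in A, B, C by auto.
    unfold is_vertex; cbn [fst snd]; repeat split; try lia.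
    + intro X; inversion X; lia.
    + apply th; auto.
    + apply th; auto.
    + apply th; auto.
  - exists (a, nxt n e), (a + 1, e). pose proof (nxt_range n e He).
    rewrite <- !(nxt_cyc n e) in A, B, C by auto.
    unfold is_vertex; cbn [fst snd]; repeat split; try lia.
    + intro X; inversion X; lia.
    + apply th; unfold ok1 in *; lia.
    + apply th; unfold ok1 in *; lia.
    + apply th; unfold ok1 in *; lia.
Qed.

Lemma colref2 n b j1 j2 : 3 <= n -> Coll2 n (b, j1) (b, j2).
Proof.
  intros Hn; exists (b - 1, 0), (b + 1, 0); unfold is_vertex, DF; cbn [fst snd]; repeat split; try lia.
  intro X; inversion X; lia.
Qed.
Lemma colref3 n b j1 j2 j3 : 3 <= n -> Coll3 n (b, j1) (b, j2) (b, j3).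
Proof.
  intros Hn; exists (b - 1, 0), (b + 1, 0); unfold is_vertex, DF; cbn [fst snd]; repeat split; try lia.
  intro X; inversion X; lia.
Qed.

Lemma dd_self n j : 3 <= n -> 0 <= j < n -> dd n j j = 1.
Proof. unfold dd, cyc; lia. Qed.
Lemma dd_prev_self n j : 3 <= n -> 0 <= j < n -> dd n (j - 1) j = -1.
Proof. unfold dd, cyc; lia. Qed.
Lemma odd_dis h j1 j2 : 1 <= h -> 0 <= j1 < 2*h+1 -> 0 <= j2 < 2*h+1 ->
  Z.abs (dd (2*h+1) j1 j2) = 1 \/ Z.abs (dd (2*h+1) (j1 - 1) j2) = 1.
Proof. unfold dd, cyc; intros; lia. Qed.
Lemma dd_wrap n j : 0 <= j < n -> dd n (n - 1) j = dd n (0 - 1) j.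
Proof. unfold dd, cyc; lia. Qed.

Ltac try_a2 n e b1 b2 :=
  first [ apply (edge_coll2 n (b1 - 1) e); [lia|lia|lia|lia| unfold ok1; lia]
        | apply (edge_coll2 n (b2 - 1) e); [lia|lia|lia|lia| unfold ok1; lia]
        | apply (edge_coll2 n b1 e); [lia|lia|lia|lia| unfold ok1; lia]
        | apply (edge_coll2 n b2 e); [lia|lia|lia|lia| unfold ok1; lia] ].

Lemma odd_coll h w1 w2 : 1 <= h -> is_vertex (2*h+1) w1 -> is_vertex (2*h+1) w2 -> Coll2 (2*h+1) w1 w2.
Proof.
  destruct w1 as [b1 j1], w2 as [b2 j2]; unfold is_vertex; cbn [fst snd]; intros Hh H1 H2.
  destruct (Z.eq_dec b1 b2) as [<-|Hb]; [apply colref2; lia|].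
  pose proof (dd_self (2*h+1) j1 ltac:(lia) H1).
  destruct (odd_dis h j1 j2 Hh H1 H2) as [D|D].
  - assert (X: dd (2*h+1) j1 j2 = 1 \/ dd (2*h+1) j1 j2 = -1) by lia.
    destruct X; destruct (Z.lt_ge_cases b1 b2); try_a2 (2*h+1) j1 b1 b2.
  - pose proof (dd_prev_self (2*h+1) j1 ltac:(lia) H1).
    destruct (Z.eq_dec j1 0) as [E|E].
    + subst j1. rewrite <- dd_wrap in * by lia.
      assert (X: dd (2*h+1) (2*h+1-1) j2 = 1 \/ dd (2*h+1) (2*h+1-1) j2 = -1) by lia.
      destruct X; destruct (Z.lt_ge_cases b1 b2); try_a2 (2*h+1) (2*h+1-1) b1 b2.
    + assert (X: dd (2*h+1) (j1-1) j2 = 1 \/ dd (2*h+1) (j1-1) j2 = -1) by lia.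
      destruct X; destruct (Z.lt_ge_cases b1 b2); try_a2 (2*h+1) (j1 - 1) b1 b2.
Qed.

Definition prv (n e : Z) : Z := if Z.eq_dec e 0 then n - 1 else e - 1.
Lemma prv_spec n e : (e <> 0 /\ prv n e = e - 1) \/ (e = 0 /\ prv n e = n - 1).
Proof. unfold prv; destruct Z.eq_dec; auto. Qed.
Lemma prv_range n e : 0 <= e < n -> 0 <= prv n e < n.
Proof. destruct (prv_spec n e) as [[? ->]|[? ->]]; lia. Qed.
Lemma prv_cyc n e j : 0 <= e < n -> 0 <= j < n -> cyc n (prv n e) j = cyc n (e - 1) j.
Proof. destruct (prv_spec n e) as [[? ->]|[? ->]]; unfold cyc; lia. Qed.
Lemma nxt_prv n e : 3 <= n -> 0 <= e < n -> nxt n e <> prv n e.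
Proof. destruct (nxt_spec n e) as [[? ->]|[? ->]]; destruct (prv_spec n e) as [[? ->]|[? ->]]; lia. Qed.

Lemma Coll3_12 n w1 w2 w3 : Coll3 n w1 w2 w3 -> Coll3 n w2 w1 w3.
Proof. intros (u & v & ?); exists u, v; tauto. Qed.
Lemma Coll3_23 n w1 w2 w3 : Coll3 n w1 w2 w3 -> Coll3 n w1 w3 w2.
Proof. intros (u & v & ?); exists u, v; tauto. Qed.

Lemma rowref_one m j t : 2 <= m -> 0 <= j < 2*m -> 0 <= t < 2*m -> (t = j \/ t = j + m \/ t = j - m) ->
  cyc (2*m) (j + 1) t = cyc (2*m) (j - 1) t.
Proof. unfold cyc; lia. Qed.

Lemma rowref3 m b1 b2 b3 j j2 j3 : 2 <= m -> 0 <= j < 2*m -> 0 <= j2 < 2*m -> 0 <= j3 < 2*m ->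
  (j2 = j \/ j2 = j + m \/ j2 = j - m) -> (j3 = j \/ j3 = j + m \/ j3 = j - m) ->
  Coll3 (2*m) (b1, j) (b2, j2) (b3, j3).
Proof.
  intros Hm Hj H2 H3 E2 E3.
  exists (0, nxt (2*m) j), (0, prv (2*m) j).
  pose proof (nxt_range (2*m) j Hj). pose proof (prv_range (2*m) j Hj).
  pose proof (nxt_prv (2*m) j ltac:(lia) Hj).
  unfold is_vertex, DF; cbn [fst snd]; repeat split; try lia.
  - congruence.
  - rewrite nxt_cyc, prv_cyc by lia. rewrite (rowref_one m j j) by lia. lia.
  - rewrite nxt_cyc, prv_cyc by lia. rewrite (rowref_one m j j2) by lia. lia.
  - rewrite nxt_cyc, prv_cyc by lia. rewrite (rowref_one m j j3) by lia. lia.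
Qed.

Lemma dfa1 m j : 2 <= m -> 0 <= j < 2*m -> cyc (2*m) (j+1) j = 1.
Proof. unfold cyc; lia. Qed.
Lemma dfa2 m j : 2 <= m -> 0 <= j < 2*m -> cyc (2*m) (j-1) j = 1.
Proof. unfold cyc; lia. Qed.
Lemma dfa3 m j j' : 2 <= m -> 0 <= j < 2*m -> 0 <= j' < 2*m -> (j' = j + m \/ j' = j - m) ->
  cyc (2*m) (j+1) j' = m - 1.
Proof. unfold cyc; lia. Qed.
Lemma dfa4 m j j' : 2 <= m -> 0 <= j < 2*m -> 0 <= j' < 2*m -> (j' = j + m \/ j' = j - m) ->
  cyc (2*m) (j-1) j' = m - 1.
Proof. unfold cyc; lia. Qed.
Lemma dfb m j t : 2 <= m -> 0 <= j < 2*m -> 0 <= t < 2*m -> t <> j -> t <> j + m -> t <> j - m ->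
  (cyc (2*m) (j-1) t = cyc (2*m) (j+1) t + 2 \/ cyc (2*m) (j+1) t = cyc (2*m) (j-1) t + 2).
Proof. unfold cyc. lia. Qed.
Lemma dcase_facts m j j' t : 2 <= m -> 0 <= j < 2*m -> 0 <= j' < 2*m -> 0 <= t < 2*m ->
  (j' = j + m \/ j' = j - m) -> t <> j -> t <> j' ->
  cyc (2*m) (j+1) j = 1 /\ cyc (2*m) (j-1) j = 1 /\
  cyc (2*m) (j+1) j' = m - 1 /\ cyc (2*m) (j-1) j' = m - 1 /\
  (cyc (2*m) (j-1) t = cyc (2*m) (j+1) t + 2 \/ cyc (2*m) (j+1) t = cyc (2*m) (j-1) t + 2).
Proof.
  intros. split; [apply dfa1; lia|]. split; [apply dfa2; lia|].
  split; [apply dfa3; lia|]. split; [apply dfa4; lia|]. apply dfb; lia.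
Qed.

Lemma dcase m b b3 j j' t : 2 <= m -> 0 <= j < 2*m -> 0 <= j' < 2*m -> 0 <= t < 2*m ->
  (j' = j + m \/ j' = j - m) -> t <> j -> t <> j' -> b3 <> b ->
  Coll3 (2*m) (b, j) (b, j') (b3, t).
Proof.
  intros Hm Hj Hj' Ht E N1 N2 Hb.
  pose proof (nxt_range (2*m) j Hj). pose proof (prv_range (2*m) j Hj).
  pose proof (nxt_prv (2*m) j ltac:(lia) Hj).
  pose proof (nxt_cyc (2*m) j j Hj Hj). pose proof (prv_cyc (2*m) j j Hj Hj).
  pose proof (nxt_cyc (2*m) j j' Hj Hj'). pose proof (prv_cyc (2*m) j j' Hj Hj').
  pose proof (nxt_cyc (2*m) j t Hj Ht). pose proof (prv_cyc (2*m) j t Hj Ht).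
  destruct (dcase_facts m j j' t Hm Hj Hj' Ht E N1 N2) as (F1 & F2 & F3 & F4 & F5).
  destruct (Z.lt_ge_cases b b3); destruct F5 as [F5|F5].
  - exists (b - 1, nxt (2*m) j), (b + 1, prv (2*m) j).
    unfold is_vertex, DF; cbn [fst snd]; repeat split; try lia. intro X; inversion X; lia.
  - exists (b - 1, prv (2*m) j), (b + 1, nxt (2*m) j).
    unfold is_vertex, DF; cbn [fst snd]; repeat split; try lia. intro X; inversion X; lia.
  - exists (b - 1, prv (2*m) j), (b + 1, nxt (2*m) j).
    unfold is_vertex, DF; cbn [fst snd]; repeat split; try lia. intro X; inversion X; lia.
  - exists (b - 1, nxt (2*m) j), (b + 1, prv (2*m) j).
    unfold is_vertex, DF; cbn [fst snd]; repeat split; try lia. intro X; inversion X; lia.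
Qed.

Definition Sp (m e j : Z) : Prop := (j <= e < j + m \/ e + m < j).
Lemma sgn m e j : 2 <= m -> 0 <= e < 2*m -> 0 <= j < 2*m ->
  (dd (2*m) e j = 1 /\ Sp m e j) \/
  (dd (2*m) e j = -1 /\ ~ Sp m e j).
Proof. unfold Sp, dd, cyc; intros; lia. Qed.

Ltac try_a3 n e b1 b2 b3 :=
  first [ apply (edge_coll3 n (b1 - 1) e); [lia|lia|lia|lia|lia| unfold ok1; lia]
        | apply (edge_coll3 n b1 e); [lia|lia|lia|lia|lia| unfold ok1; lia]
        | apply (edge_coll3 n b2 e); [lia|lia|lia|lia|lia| unfold ok1; lia] ].

Lemma even_sorted m b1 j1 b2 j2 b3 j3 : 2 <= m -> 0 <= j1 < 2*m -> 0 <= j2 < 2*m -> 0 <= j3 < 2*m ->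
  b1 <= b2 -> b2 <= b3 -> Coll3 (2*m) (b1, j1) (b2, j2) (b3, j3).
Proof.
  intros Hm H1 H2 H3 B12 B23.
  destruct (Z.eq_dec b1 b3) as [E|E].
  { assert (b2 = b1) by lia. subst. apply colref3; lia. }
  pose proof (dd_self (2*m) j1 ltac:(lia) H1) as d11.
  pose proof (dd_self (2*m) j2 ltac:(lia) H2) as d22.
  pose proof (dd_self (2*m) j3 ltac:(lia) H3) as d33.
  pose proof (sgn m j1 j2 Hm H1 H2) as s12. pose proof (sgn m j1 j3 Hm H1 H3) as s13.
  pose proof (sgn m j2 j1 Hm H2 H1) as s21. pose proof (sgn m j2 j3 Hm H2 H3) as s23.
  pose proof (sgn m j3 j1 Hm H3 H1) as s31. pose proof (sgn m j3 j2 Hm H3 H2) as s32.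
  destruct (Z.eq_dec b1 b2) as [E12|E12]; [|destruct (Z.eq_dec b2 b3) as [E23|E23]].
  -
    destruct s12 as [[A12 S12]|[A12 S12]]; destruct s13 as [[A13 S13]|[A13 S13]].
    all: try (try_a3 (2*m) j1 b1 b2 b3).
    all: destruct s21 as [[A21 S21]|[A21 S21]]; destruct s23 as [[A23 S23]|[A23 S23]].
    all: try (try_a3 (2*m) j2 b1 b2 b3).
    all: unfold Sp in *; assert (j2 = j1 + m \/ j2 = j1 - m) by lia.
    all: destruct (Z.eq_dec j3 j1); [apply (rowref3 m _ _ _ j1); lia|].
    all: destruct (Z.eq_dec j3 j2); [apply (rowref3 m _ _ _ j1); lia|].
    all: subst b2; apply dcase; lia.
  -
    destruct s21 as [[A21 S21]|[A21 S21]]; destruct s23 as [[A23 S23]|[A23 S23]].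
    all: try (try_a3 (2*m) j2 b1 b2 b3).
    all: destruct s31 as [[A31 S31]|[A31 S31]]; destruct s32 as [[A32 S32]|[A32 S32]].
    all: try (try_a3 (2*m) j3 b1 b2 b3).
    all: unfold Sp in *; assert (j3 = j2 + m \/ j3 = j2 - m) by lia.
    all: destruct (Z.eq_dec j1 j2); [apply (rowref3 m _ _ _ j1); lia|].
    all: destruct (Z.eq_dec j1 j3); [apply (rowref3 m _ _ _ j1); lia|].
    all: subst b3; apply Coll3_12, Coll3_23, dcase; lia.
  -
    destruct s12 as [[A12 S12]|[A12 S12]]; destruct s13 as [[A13 S13]|[A13 S13]].
    all: try (try_a3 (2*m) j1 b1 b2 b3).
    all: destruct s21 as [[A21 S21]|[A21 S21]]; destruct s23 as [[A23 S23]|[A23 S23]].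
    all: try (try_a3 (2*m) j2 b1 b2 b3).
    all: destruct s31 as [[A31 S31]|[A31 S31]]; destruct s32 as [[A32 S32]|[A32 S32]].
    all: try (try_a3 (2*m) j3 b1 b2 b3).
    all: unfold Sp in *; apply (rowref3 m _ _ _ j1); lia.
Qed.

Lemma even_coll m w1 w2 w3 : 2 <= m -> is_vertex (2*m) w1 -> is_vertex (2*m) w2 -> is_vertex (2*m) w3 ->
  Coll3 (2*m) w1 w2 w3.
Proof.
  destruct w1 as [b1 j1], w2 as [b2 j2], w3 as [b3 j3]; unfold is_vertex; cbn [fst snd]; intros Hm H1 H2 H3.
  destruct (Z.le_ge_cases b1 b2); destruct (Z.le_ge_cases b2 b3); destruct (Z.le_ge_cases b1 b3).
  all: first
   [ apply even_sorted; lia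
   | apply Coll3_23; apply even_sorted; lia
   | apply Coll3_12; apply even_sorted; lia
   | apply Coll3_12, Coll3_23; apply even_sorted; lia
   | apply Coll3_23, Coll3_12; apply even_sorted; lia
   | apply Coll3_12, Coll3_23, Coll3_12; apply even_sorted; lia ].
Qed.

Lemma cyc0 n i : 0 <= i < n -> cyc n i 0 = Z.min i (n - i).
Proof. unfold cyc; lia. Qed.
Lemma cych h i : 0 <= h -> 0 <= i < 2*h+1 -> cyc (2*h+1) i h = Z.abs (i - h).
Proof. unfold cyc; lia. Qed.
Lemma odd_core h X Y i i' : 1 <= h -> 0 <= i < 2*h+1 -> 0 <= i' < 2*h+1 ->
  X + Z.min i (2*h+1-i) = Y + Z.min i' (2*h+1-i') ->
  X + Z.abs (i - h) = Y + Z.abs (i' - h) -> i = i'.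
Proof. intros. lia. Qed.
Lemma abs_inj a a' : Z.abs a = Z.abs a' -> Z.abs (a-1) = Z.abs (a'-1) -> a = a'.
Proof. lia. Qed.
Lemma cycm m i : 1 <= m -> 0 <= i < 2*m -> cyc (2*m) i m = m - Z.min i (2*m - i).
Proof. unfold cyc; lia. Qed.
Lemma even_core m i i' : 2 <= m -> 0 <= i < 2*m -> 0 <= i' < 2*m ->
  Z.min i (2*m-i) = Z.min i' (2*m-i') -> cyc (2*m) i 1 = cyc (2*m) i' 1 -> i = i'.
Proof. unfold cyc; intros. lia. Qed.

Lemma all_eq n (hn : 3 <= n) (l : list vertex) u v :
  (forall x, In x l -> is_vertex n x) -> is_vertex n u -> is_vertex n v ->
  ~ (exists x, In x l /\ resolves n x u v) -> forall x, In x l -> DF n u x = DF n v x.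
Proof.
  intros Hl Hu Hv Hno x Hx. apply NNPP; intro Hne. apply Hno. exists x; split; auto.
  apply resolves_iff; auto.
Qed.

Lemma odd_resolving h : 1 <= h -> resolving_set (2*h+1) (fun x => In x [(0, 0); (0, h); (1, 0)]).
Proof.
  intros Hh.
  assert (Hl : forall x, In x [(0, 0); (0, h); (1, 0)] -> is_vertex (2*h+1) x).
  { intros x Hx; simpl in Hx; destruct Hx as [<-|[<-|[<-|[]]]]; unfold is_vertex; cbn [fst snd]; lia. }
  split; auto.
  intros [a i] [a' i'] Hu Hv Huv. apply NNPP; intro Hno.
  pose proof (all_eq (2*h+1) ltac:(lia) _ _ _ Hl Hu Hv Hno) as E.
  pose proof (E (0, 0) ltac:(simpl; auto)) as E1.
  pose proof (E (0, h) ltac:(simpl; auto)) as E2.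
  pose proof (E (1, 0) ltac:(simpl; auto)) as E3.
  unfold is_vertex in Hu, Hv; cbn [fst snd] in Hu, Hv.
  unfold DF in E1, E2, E3; cbn [fst snd] in E1, E2, E3.
  rewrite !cyc0 in E1, E3 by lia. rewrite !cych in E2 by lia.
  replace (a - 0) with a in * by lia. replace (a' - 0) with a' in * by lia.
  assert (i = i') by (apply (odd_core h (Z.abs a) (Z.abs a')); lia).
  subst i'. assert (a = a') by (apply abs_inj; lia). subst. auto.
Qed.

Lemma even_resolving m : 2 <= m -> resolving_set (2*m) (fun x => In x [(0, 0); (0, m); (0, 1); (1, 0)]).
Proof.
  intros Hm.
  assert (Hl : forall x, In x [(0, 0); (0, m); (0, 1); (1, 0)] -> is_vertex (2*m) x).
  { intros x Hx; simpl in Hx; destruct Hx as [<-|[<-|[<-|[<-|[]]]]]; unfold is_vertex; cbn [fst snd]; lia. }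
  split; auto.
  intros [a i] [a' i'] Hu Hv Huv. apply NNPP; intro Hno.
  pose proof (all_eq (2*m) ltac:(lia) _ _ _ Hl Hu Hv Hno) as E.
  pose proof (E (0, 0) ltac:(simpl; auto)) as E1.
  pose proof (E (0, m) ltac:(simpl; auto)) as E2.
  pose proof (E (0, 1) ltac:(simpl; auto)) as E4.
  pose proof (E (1, 0) ltac:(simpl; auto)) as E3.
  unfold is_vertex in Hu, Hv; cbn [fst snd] in Hu, Hv.
  unfold DF in E1, E2, E3, E4; cbn [fst snd] in E1, E2, E3, E4.
  rewrite !cyc0 in E1, E3 by lia. rewrite !cycm in E2 by lia.
  replace (a - 0) with a in * by lia. replace (a' - 0) with a' in * by lia.
  assert (i = i') by (apply (even_core m); lia).
  subst i'. assert (a = a') by (apply abs_inj; lia). subst. auto.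
Qed.

Lemma lower_from_coll2 n (hn : 3 <= n) (l : list vertex) :
  (forall w1 w2, is_vertex n w1 -> is_vertex n w2 -> Coll2 n w1 w2) ->
  NoDup l -> resolving_set n (fun x => In x l) -> (3 <= length l)%nat.
Proof.
  intros HC _ HR.
  assert (V : forall x, In x l -> is_vertex n x) by apply HR.
  assert (V0 : is_vertex n (0, 0)) by (unfold is_vertex; cbn [fst snd]; lia).
  destruct l as [|x1 [|x2 [|x3 l]]]; simpl; try lia; exfalso.
  - destruct (HC _ _ V0 V0) as (u & v & Hu & Hv & Huv & _).
    apply (not_resolving n hn [] u v Hu Hv Huv); auto. intros x [].
  - destruct (HC x1 x1 (V x1 ltac:(simpl; auto)) (V x1 ltac:(simpl; auto))) as (u & v & Hu & Hv & Huv & E1 & _).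
    apply (not_resolving n hn [x1] u v Hu Hv Huv); auto. intros x [<-|[]]; auto.
  - destruct (HC x1 x2 (V x1 ltac:(simpl; auto)) (V x2 ltac:(simpl; auto))) as (u & v & Hu & Hv & Huv & E1 & E2).
    apply (not_resolving n hn [x1; x2] u v Hu Hv Huv); auto. intros x [<-|[<-|[]]]; auto.
Qed.

Lemma lower_from_coll3 n (hn : 3 <= n) (l : list vertex) :
  (forall w1 w2 w3, is_vertex n w1 -> is_vertex n w2 -> is_vertex n w3 -> Coll3 n w1 w2 w3) ->
  NoDup l -> resolving_set n (fun x => In x l) -> (4 <= length l)%nat.
Proof.
  intros HC _ HR.
  assert (V : forall x, In x l -> is_vertex n x) by apply HR.
  assert (V0 : is_vertex n (0, 0)) by (unfold is_vertex; cbn [fst snd]; lia).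
  destruct l as [|x1 [|x2 [|x3 [|x4 l]]]]; simpl; try lia; exfalso.
  - destruct (HC _ _ _ V0 V0 V0) as (u & v & Hu & Hv & Huv & _).
    apply (not_resolving n hn [] u v Hu Hv Huv); auto. intros x [].
  - destruct (HC x1 x1 x1 (V x1 ltac:(simpl; auto)) (V x1 ltac:(simpl; auto)) (V x1 ltac:(simpl; auto)))
      as (u & v & Hu & Hv & Huv & E1 & _).
    apply (not_resolving n hn [x1] u v Hu Hv Huv); auto. intros x [<-|[]]; auto.
  - destruct (HC x1 x2 x2 (V x1 ltac:(simpl; auto)) (V x2 ltac:(simpl; auto)) (V x2 ltac:(simpl; auto)))
      as (u & v & Hu & Hv & Huv & E1 & E2 & _).
    apply (not_resolving n hn [x1; x2] u v Hu Hv Huv); auto. intros x [<-|[<-|[]]]; auto.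
  - destruct (HC x1 x2 x3 (V x1 ltac:(simpl; auto)) (V x2 ltac:(simpl; auto)) (V x3 ltac:(simpl; auto)))
      as (u & v & Hu & Hv & Huv & E1 & E2 & E3).
    apply (not_resolving n hn [x1; x2; x3] u v Hu Hv Huv); auto. intros x [<-|[<-|[<-|[]]]]; auto.
Qed.

Theorem proposition7 (n : Z) (hn : 3 <= n) :
  (Z.odd n = true ->
     metric_dim n 3 /\ metric_basis n [(0, 0); (0, (n - 1) / 2); (1, 0)]) /\
  (Z.even n = true ->
     metric_dim n 4 /\ metric_basis n [(0, 0); (0, n / 2); (0, 1); (1, 0)]).
Proof.
  split; intros Hp.
  - apply Z.odd_spec in Hp. destruct Hp as [h Hh].
    subst n. replace ((2*h+1 - 1) / 2) with h by (replace (2*h+1-1) with (h*2) by lia; rewrite Z.div_mul; lia).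
    assert (Hh1 : 1 <= h) by lia.
    assert (ND : NoDup [(0, 0); (0, h); (1, 0)]).
    { repeat constructor; simpl; intros X; repeat destruct X as [X|X]; try inversion X; lia. }
    assert (MD : metric_dim (2*h+1) 3).
    { split.
      - exists [(0, 0); (0, h); (1, 0)]. split; auto. split; auto. apply odd_resolving; auto.
      - intros l Hl HR. apply (lower_from_coll2 (2*h+1)); auto; try lia.
        intros; apply odd_coll; auto. }
    split; auto. split; auto. split; auto. apply odd_resolving; auto.
  - apply Z.even_spec in Hp. destruct Hp as [m Hm].
    subst n. replace ((2*m) / 2) with m by (replace (2*m) with (m*2) by lia; rewrite Z.div_mul; lia).
    assert (Hm2 : 2 <= m) by lia.
    assert (ND : NoDup [(0, 0); (0, m); (0, 1); (1, 0)]).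
    { repeat constructor; simpl; intros X; repeat destruct X as [X|X]; try inversion X; lia. }
    assert (MD : metric_dim (2*m) 4).
    { split.
      - exists [(0, 0); (0, m); (0, 1); (1, 0)]. split; auto. split; auto. apply even_resolving; auto.
      - intros l Hl HR. apply (lower_from_coll3 (2*m)); auto; try lia.
        intros; apply even_coll; auto. }
    split; auto. split; auto. split; auto. apply even_resolving; auto.
Qed.
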